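(* Let $p>2$ be a finite integer. For each $n\ge2$ let non-negative numbers ${p_j^n}'$, ${p_j^n}''$ ($j=1,\dots,n$) and $p^n_{OPT}$ be given with $p^n_{OPT}+\sum_{j=1}^n{p_j^n}'+\sum_{j=1}^n{p_j^n}''=1$. Let $f$ be the randomized mechanism which, on a reported profile ${\bf x}=(x_1,\dots,x_n)$, locates the facility at $OPT({\bf x})$ with probability $p^n_{OPT}$, at $x_j$ with probability ${p_j^n}'$, and at $x_{[j]}$ with probability ${p_j^n}''$ (probabilities of coinciding locations add up), where $x_{[j]}$ is the $j$-th largest component of ${\bf x}$ and $OPT({\bf x})$ is the unique minimizer over $y\in\mathbb{R}$ of $\sum_i|x_i-y|^p$. If $f$ is strategyproof, then the approximation ratio of $f$ is at least $2^{1-\frac1p}$.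
   Context: A randomized mechanism maps each profile ${\bf x}\in\mathbb{R}^n$ (for each $n\ge2$) to a probability distribution $\pi$ on $\mathbb{R}$; the facility location $y$ is drawn from $\pi$. Agent $i$ located at $x_i$ has cost $C(x_i,\pi)=\mathbb{E}_{y\sim\pi}|x_i-y|$. The mechanism is strategyproof if for every $n$, every agent $i$, all $x_i,x_i'\in\mathbb{R}$ and all ${\bf x}_{-i}$: $C(x_i,f(x_i,{\bf x}_{-i}))\le C(x_i,f(x_i',{\bf x}_{-i}))$. The social cost is $sc({\bf x},\pi)=\mathbb{E}_{y\sim\pi}\big(\sum_i|x_i-y|^p\big)^{1/p}$, and the approximation ratio of $f$ is $\sup sc({\bf x},f({\bf x}))/\min_{y}sc({\bf x},y)$, the supremum taken over all $n\ge 2$ and all profiles ${\bf x}\in\mathbb{R}^n$ (with $0/0=1$, $c/0=\infty$ for $c>0$). *)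

(* Defs.v *)
From Stdlib Require Import Reals Lra Lia List Classical ClassicalEpsilon.
Import ListNotations.
Open Scope R_scope.

Fixpoint sumR (n : nat) (f : nat -> R) : R :=
  match n with
  | O => 0
  | S m => sumR m f + f m
  end.

(* p-th root on nonnegative reals, with rootp p 0 = 0 (Rpower 0 _ is not 0 in Stdlib). *)
Definition rootp (p : nat) (t : R) : R :=
  if Rle_dec t 0 then 0 else Rpower t (/ INR p).

Definition sumpow (p n : nat) (x : nat -> R) (y : R) : R :=
  sumR n (fun i => (Rabs (x i - y)) ^ p).

(* OPT(x): the minimizer over y of sum_i |x_i - y|^p (chosen by epsilon;
   it exists and is unique for p > 2, n >= 2). *)
Definition OPT (p n : nat) (x : nat -> R) : R :=
  epsilon (inhabits 0) (fun y => forall z, sumpow p n x y <= sumpow p n x z).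

Fixpoint insert_desc (a : R) (l : list R) : list R :=
  match l with
  | nil => [a]
  | b :: t => if Rle_dec b a then a :: b :: t else b :: insert_desc a t
  end.
Definition sort_desc (l : list R) : list R := fold_right insert_desc nil l.

(* x_[j+1]: the (j+1)-th largest component of (x_0, ..., x_{n-1}) (j is 0-based) *)
Definition kth_largest (n : nat) (x : nat -> R) (j : nat) : R :=
  nth j (sort_desc (map x (seq 0 n))) 0.

(* The mechanism: for each n, weights popt n, p1 n j (at x_j), p2 n j (at x_[j+1]). *)
Definition exp_cost (p : nat) (popt : nat -> R) (p1 p2 : nat -> nat -> R)
  (n : nat) (x : nat -> R) (g : R -> R) : R :=
  popt n * g (OPT p n x)
  + sumR n (fun j => p1 n j * g (x j))
  + sumR n (fun j => p2 n j * g (kth_largest n x j)).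

Definition agent_cost p popt p1 p2 n x (a : R) : R :=
  exp_cost p popt p1 p2 n x (fun y => Rabs (a - y)).

Definition update (x : nat -> R) (i : nat) (v : R) : nat -> R :=
  fun k => if Nat.eq_dec k i then v else x k.

Definition strategyproof p popt p1 p2 : Prop :=
  forall (n : nat), (2 <= n)%nat -> forall (i : nat), (i < n)%nat ->
  forall (x : nat -> R) (v : R),
    agent_cost p popt p1 p2 n x (x i) <= agent_cost p popt p1 p2 n (update x i v) (x i).

Definition sc_det (p n : nat) (x : nat -> R) (y : R) : R := rootp p (sumpow p n x y).

Definition sc_mech p popt p1 p2 n x : R := exp_cost p popt p1 p2 n x (sc_det p n x).

(* min_y sc(x, y) (chosen by epsilon; it is attained) *)
Definition sc_opt (p n : nat) (x : nat -> R) : R :=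
  epsilon (inhabits 0)
    (fun c => (exists y, c = sc_det p n x y) /\ forall y, c <= sc_det p n x y).

(* "the ratio a/b exceeds r", with conventions 0/0 = 1, c/0 = +oo for c > 0 *)
Definition ratio_gt (a b r : R) : Prop :=
  (0 < b /\ r < a / b) \/ (b = 0 /\ 0 < a) \/ (b = 0 /\ a = 0 /\ r < 1).

(* approximation ratio (sup over n >= 2 and profiles) is >= r *)
Definition approx_ratio_ge p popt p1 p2 (r : R) : Prop :=
  forall r', r' < r -> exists (n : nat) (x : nat -> R), (2 <= n)%nat /\
    ratio_gt (sc_mech p popt p1 p2 n x) (sc_opt p n x) r'.

(* Main.v *)
Require Import Defs.
From Stdlib Require Import Reals Lra Lia ZArith List Classical ClassicalEpsilon FunctionalExtensionality.
Import ListNotations.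
Open Scope R_scope.

Lemma nat_unbounded (r : R) : exists k : nat, r < INR k.
Proof.
  destruct (archimed (Rabs r)) as [H1 _].
  assert (Hz : (0 < up (Rabs r))%Z).
  { apply lt_0_IZR. pose proof (Rabs_pos r). lra. }
  exists (Z.to_nat (up (Rabs r))).
  rewrite INR_IZR_INZ, Z2Nat.id by lia.
  pose proof (Rle_abs r). lra.
Qed.

Lemma sumR_ext n f g : (forall i, (i < n)%nat -> f i = g i) -> sumR n f = sumR n g.
Proof.
  induction n; simpl; intros H; [reflexivity|].
  rewrite IHn by (intros; apply H; lia). rewrite H by lia. reflexivity.
Qed.

Lemma sumR_plus n f g : sumR n (fun i => f i + g i) = sumR n f + sumR n g.
Proof. induction n; simpl; [ring| rewrite IHn; ring]. Qed.

Lemma sumR_const n c : sumR n (fun _ => c) = INR n * c.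
Proof. induction n; simpl sumR; [simpl; ring|]. rewrite IHn, S_INR; ring. Qed.

Lemma sumR_nonneg n f : (forall i, (i<n)%nat -> 0 <= f i) -> 0 <= sumR n f.
Proof.
  induction n; simpl; intros H; [lra|].
  pose proof (IHn (fun i Hi => H i ltac:(lia))). pose proof (H n ltac:(lia)). lra.
Qed.

Lemma sumR_ge_term n f i : (forall j, (j<n)%nat -> 0 <= f j) -> (i<n)%nat -> f i <= sumR n f.
Proof.
  induction n; intros H Hi; [lia|]. simpl.
  destruct (Nat.eq_dec i n) as [->|Hne].
  - pose proof (sumR_nonneg n f (fun j Hj => H j ltac:(lia))). lra.
  - pose proof (IHn (fun j Hj => H j ltac:(lia)) ltac:(lia)). pose proof (H n ltac:(lia)). lra.
Qed.

Lemma sumR_shift n f : sumR (S n) f = f 0%nat + sumR n (fun j => f (S j)).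
Proof.
  induction n.
  - simpl. ring.
  - change (sumR (S (S n)) f) with (sumR (S n) f + f (S n)).
    rewrite IHn. simpl. ring.
Qed.

Lemma sumR_add m n f : sumR (m + n) f = sumR m f + sumR n (fun j => f (m + j)%nat).
Proof.
  induction n; simpl.
  - rewrite Nat.add_0_r; ring.
  - rewrite Nat.add_succ_r; simpl; rewrite IHn; ring.
Qed.

Lemma sort_id x s len :
  (forall i j, (s <= i)%nat -> (i <= j)%nat -> (j < s + len)%nat -> x j <= x i) ->
  sort_desc (map x (seq s len)) = map x (seq s len).
Proof.
  revert s. induction len; intros s H; [reflexivity|].
  simpl seq. simpl map. unfold sort_desc; simpl fold_right. fold (sort_desc (map x (seq (S s) len))).
  rewrite IHlen by (intros; apply H; lia).
  destruct len; simpl. reflexivity.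
  destruct (Rle_dec (x (S s)) (x s)) as [_|Hn]; [reflexivity|].
  exfalso; apply Hn, H; lia.
Qed.

Definition desc n (x : nat -> R) := forall i j, (i <= j)%nat -> (j < n)%nat -> x j <= x i.

Lemma kth_desc n x j : desc n x -> (j < n)%nat -> kth_largest n x j = x j.
Proof.
  intros H Hj. unfold kth_largest. rewrite sort_id by (intros; apply H; lia).
  rewrite nth_indep with (d' := x 0%nat) by (rewrite length_map, length_seq; lia).
  rewrite map_nth, seq_nth by lia. reflexivity.
Qed.

Lemma exp_cost_desc p popt p1 p2 n x g : desc n x ->
  exp_cost p popt p1 p2 n x g = popt n * g (OPT p n x) + sumR n (fun j => (p1 n j + p2 n j) * g (x j)).
Proof.
  intros H. unfold exp_cost.
  rewrite (sumR_ext n (fun j => p2 n j * g (kth_largest n x j)) (fun j => p2 n j * g (x j)))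
    by (intros; rewrite kth_desc; auto).
  rewrite (sumR_ext n (fun j => (p1 n j + p2 n j) * g (x j)) (fun j => p1 n j * g (x j) + p2 n j * g (x j)))
    by (intros; ring).
  rewrite sumR_plus. ring.
Qed.

Lemma bern q A w : 0 <= A -> 0 <= w -> A ^ (S q) + INR (S q) * A ^ q * (w - A) <= w ^ (S q).
Proof.
  intros HA Hw. induction q.
  - simpl. lra.
  - assert (HP : 0 <= A ^ q) by (apply pow_le; auto).
    assert (Hs : 0 <= INR (S q)) by apply pos_INR.
    change (A ^ S (S q)) with (A * (A * A ^ q)).
    change (A ^ S q) with (A * A ^ q) in IHq |- *.
    change (w ^ S (S q)) with (w * w ^ S q).
    rewrite S_INR.
    assert (H1 : w * (A * A ^ q + INR (S q) * A ^ q * (w - A)) <= w * w ^ S q)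
      by (apply Rmult_le_compat_l; auto).
    assert (H2 : 0 <= INR (S q) * A ^ q * ((w - A) * (w - A))).
    { apply Rmult_le_pos; [apply Rmult_le_pos; assumption| apply Rle_0_sqr]. }
    nra.
Qed.

Definition psi (q : nat) (u : R) : R := u * Rabs u ^ q.

Lemma psi_pos q u : 0 <= u -> psi q u = u ^ S q.
Proof. intros H. unfold psi. rewrite Rabs_right by lra. reflexivity. Qed.

Lemma psi_opp q u : psi q (- u) = - psi q u.
Proof. unfold psi. rewrite Rabs_Ropp. ring. Qed.

Lemma psi_neg q u : u <= 0 -> psi q u = - ((- u) ^ S q).
Proof. intros H. rewrite <- (Ropp_involutive u) at 1. rewrite psi_opp, psi_pos by lra. reflexivity. Qed.

Lemma tangent q u1 u2 :
  Rabs u1 ^ (S (S q)) + INR (S (S q)) * psi q u1 * (u2 - u1) <= Rabs u2 ^ (S (S q)).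
Proof.
  pose proof (Rle_abs u2). pose proof (Rle_abs (- u2)). rewrite Rabs_Ropp in *.
  assert (Hc : 0 <= INR (S (S q))) by apply pos_INR.
  destruct (Rle_dec 0 u1) as [Hu|Hu].
  - rewrite psi_pos by auto. rewrite (Rabs_right u1) by lra.
    pose proof (bern (S q) u1 (Rabs u2) Hu (Rabs_pos u2)).
    assert (HK : 0 <= INR (S (S q)) * u1 ^ S q) by (apply Rmult_le_pos; auto; apply pow_le; auto).
    assert (INR (S (S q)) * u1 ^ S q * (u2 - u1) <= INR (S (S q)) * u1 ^ S q * (Rabs u2 - u1))
      by (apply Rmult_le_compat_l; lra).
    lra.
  - rewrite psi_neg by lra. rewrite (Rabs_left u1) by lra.
    pose proof (bern (S q) (- u1) (Rabs u2) ltac:(lra) (Rabs_pos u2)).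
    assert (HK : 0 <= INR (S (S q)) * (- u1) ^ S q) by (apply Rmult_le_pos; auto; apply pow_le; lra).
    assert (INR (S (S q)) * (- u1) ^ S q * (- u2 + u1) <= INR (S (S q)) * (- u1) ^ S q * (Rabs u2 - - u1))
      by (apply Rmult_le_compat_l; lra).
    replace (INR (S (S q)) * - (- u1) ^ S q * (u2 - u1)) with (INR (S (S q)) * (- u1) ^ S q * (- u2 + u1)) by ring.
    lra.
Qed.

Definition Gf q n (x : nat -> R) w := sumR n (fun i => psi q (w - x i)).

Lemma sumpow_tangent q n x w z :
  sumpow (S (S q)) n x w + INR (S (S q)) * (z - w) * Gf q n x w <= sumpow (S (S q)) n x z.
Proof.
  unfold sumpow, Gf. induction n; cbn [sumR].
  - lra.
  - pose proof (tangent q (w - x n) (z - x n)).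
    rewrite (Rabs_minus_sym (x n) w), (Rabs_minus_sym (x n) z).
    replace (z - x n - (w - x n)) with (z - w) in H by ring.
    match goal with |- context [INR ?c * (z - w) * (?G + ?P)] =>
      replace (INR c * (z - w) * (G + P)) with (INR c * (z - w) * G + INR c * P * (z - w)) by ring end.
    lra.
Qed.

Definition isMin p n x y := forall z, sumpow p n x y <= sumpow p n x z.

Lemma root_min q n x w : Gf q n x w = 0 -> isMin (S (S q)) n x w.
Proof. intros H z. pose proof (sumpow_tangent q n x w z). rewrite H in H0. lra. Qed.

Lemma min_ge q n x w y : Gf q n x w < 0 -> isMin (S (S q)) n x y -> w <= y.
Proof.
  intros H Hm. destruct (Rle_dec w y) as [|Hn]; auto. exfalso.
  pose proof (sumpow_tangent q n x w y). pose proof (Hm w).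
  assert (0 < INR (S (S q))) by (apply lt_0_INR; lia).
  assert (0 < INR (S (S q)) * ((y - w) * Gf q n x w)).
  { apply Rmult_lt_0_compat; auto. nra. }
  nra.
Qed.

Lemma min_le q n x w y : 0 < Gf q n x w -> isMin (S (S q)) n x y -> y <= w.
Proof.
  intros H Hm. destruct (Rle_dec y w) as [|Hn]; auto. exfalso.
  pose proof (sumpow_tangent q n x w y). pose proof (Hm w).
  assert (0 < INR (S (S q))) by (apply lt_0_INR; lia).
  assert (0 < INR (S (S q)) * ((y - w) * Gf q n x w)).
  { apply Rmult_lt_0_compat; auto. nra. }
  nra.
Qed.

Lemma OPT_spec p n x : (exists y, isMin p n x y) -> isMin p n x (OPT p n x).
Proof. intros H. unfold OPT. exact (epsilon_spec _ _ H). Qed.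

Lemma cont_psi q : continuity (psi q).
Proof.
  assert (H : continuity (fun u => Rabs u ^ q)).
  { induction q.
    - apply continuity_const. intros a b; reflexivity.
    - exact (continuity_mult _ _ Rcontinuity_abs IHq). }
  exact (continuity_mult _ _ (derivable_continuous _ derivable_id) H).
Qed.

Lemma cont_Gf q n x : continuity (fun w => Gf q n x w).
Proof.
  unfold Gf. induction n; simpl.
  - apply continuity_const. intros a b; reflexivity.
  - apply (continuity_plus _ _ IHn).
    exact (continuity_comp (fun w => w - x n) (psi q)
      (derivable_continuous _ (derivable_minus _ _ derivable_id (derivable_const (x n)))) (cont_psi q)).
Qed.

Lemma rootp_nonneg p t : 0 <= rootp p t.
Proof. unfold rootp. destruct (Rle_dec t 0); [lra|]. unfold Rpower. left; apply exp_pos. Qed.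

Lemma rootp_pos p t : 0 < t -> rootp p t = Rpower t (/ INR p).
Proof. intros H. unfold rootp. destruct (Rle_dec t 0); [lra|reflexivity]. Qed.

Lemma rootp_mono p t1 t2 : (0 < p)%nat -> t1 <= t2 -> rootp p t1 <= rootp p t2.
Proof.
  intros Hp H. unfold rootp. destruct (Rle_dec t1 0), (Rle_dec t2 0).
  - lra.
  - unfold Rpower; left; apply exp_pos.
  - lra.
  - apply Rle_Rpower_l. left; apply Rinv_0_lt_compat, lt_0_INR; auto. lra.
Qed.

Lemma sc_opt_eq p n x y0 : (0 < p)%nat -> isMin p n x y0 -> sc_opt p n x = sc_det p n x y0.
Proof.
  intros Hp Hm. unfold sc_opt.
  set (P := fun c => (exists y, c = sc_det p n x y) /\ forall y, c <= sc_det p n x y).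
  change (epsilon (inhabits 0) P = sc_det p n x y0).
  assert (HP : exists c, P c).
  { exists (sc_det p n x y0). split; [eauto|]. intros y. unfold sc_det. apply rootp_mono; auto. }
  destruct (epsilon_spec (inhabits 0) P HP) as [[y1 E] H2].
  assert (H3 : sc_det p n x y0 <= sc_det p n x y1) by (unfold sc_det; apply rootp_mono; auto).
  specialize (H2 y0). lra.
Qed.

Lemma pow_strict m x y : 0 < x -> x < y -> x ^ S m < y ^ S m.
Proof.
  intros Hx Hy. pose proof (bern m x y ltac:(lra) ltac:(lra)).
  assert (0 < INR (S m) * x ^ m * (y - x)).
  { apply Rmult_lt_0_compat; [apply Rmult_lt_0_compat; [apply lt_0_INR; lia| apply pow_lt; auto]| lra]. }
  lra.
Qed.

Lemma pow_le1 k x : 0 <= x <= 1 -> x ^ k <= 1.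
Proof.
  intros H. induction k; simpl; [lra|].
  assert (0 <= x ^ k) by (apply pow_le; lra).
  assert (x * x ^ k <= 1 * 1) by (apply Rmult_le_compat; lra). lra.
Qed.

Definition Q (n : nat) (d : R) : nat -> R :=
  fun j => if Nat.eq_dec j 0 then 2 else if Nat.eq_dec j (n-1) then d else 1.

Lemma sumR_Q n d (h : R -> R) : (2 <= n)%nat ->
  sumR n (fun i => h (Q n d i)) = h 2 + INR (n-2) * h 1 + h d.
Proof.
  intros Hn. destruct n as [|[|m]]; try lia.
  replace (S (S m) - 2)%nat with m by lia.
  change (sumR (S (S m)) (fun i => h (Q (S (S m)) d i))) with
    (sumR (S m) (fun i => h (Q (S (S m)) d i)) + h (Q (S (S m)) d (S m))).
  rewrite sumR_shift.
  rewrite (sumR_ext m (fun j => h (Q (S (S m)) d (S j))) (fun _ => h 1)).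
  2:{ intros j Hj. unfold Q. destruct (Nat.eq_dec (S j) 0); [lia|].
      destruct (Nat.eq_dec (S j) (S (S m) - 1)); [lia|reflexivity]. }
  rewrite sumR_const. unfold Q. destruct (Nat.eq_dec 0 0); [|lia].
  destruct (Nat.eq_dec (S m) 0); [lia|].
  destruct (Nat.eq_dec (S m) (S (S m) - 1)); [|lia]. ring.
Qed.

Lemma Q_desc n d : d <= 1 -> desc n (Q n d).
Proof.
  intros Hd i j Hij Hj. unfold Q.
  destruct (Nat.eq_dec j 0), (Nat.eq_dec j (n-1)), (Nat.eq_dec i 0), (Nat.eq_dec i (n-1));
    try lra; lia.
Qed.

Lemma Q_update n v : (2 <= n)%nat -> update (Q n 0) (n-1) v = Q n v.
Proof.
  intros Hn. apply functional_extensionality. intros k. unfold update, Q.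
  destruct (Nat.eq_dec k (n-1)) as [->|Hk].
  - destruct (Nat.eq_dec (n-1) 0); [lia|]. reflexivity.
  - reflexivity.
Qed.

Lemma Q_last n d : (2 <= n)%nat -> Q n d (n-1) = d.
Proof.
  intros Hn. unfold Q. destruct (Nat.eq_dec (n-1) 0); [lia|].
  destruct (Nat.eq_dec (n-1) (n-1)); [reflexivity|lia].
Qed.

Lemma Q_before n d d' j : (j < n - 1)%nat -> Q n d j = Q n d' j.
Proof.
  intros Hj. unfold Q. destruct (Nat.eq_dec j 0); [reflexivity|].
  destruct (Nat.eq_dec j (n-1)); [lia|reflexivity].
Qed.

Lemma sumpow_Q p n d y : (2 <= n)%nat ->
  sumpow p n (Q n d) y = Rabs (2 - y) ^ p + INR (n-2) * Rabs (1 - y) ^ p + Rabs (d - y) ^ p.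
Proof. intros Hn. unfold sumpow. apply (sumR_Q n d (fun u => Rabs (u - y) ^ p)); auto. Qed.

Lemma Gf_Q q n d w : (2 <= n)%nat ->
  Gf q n (Q n d) w = psi q (w - 2) + INR (n-2) * psi q (w - 1) + psi q (w - d).
Proof. intros Hn. unfold Gf. apply (sumR_Q n d (fun u => psi q (w - u))); auto. Qed.

Definition P2 (k : nat) : nat -> R := fun j => if Compare_dec.lt_dec j k then 1 else 0.

Lemma sumR_P2 k h : sumR (k + k) (fun i => h (P2 k i)) = INR k * h 1 + INR k * h 0.
Proof.
  rewrite sumR_add.
  rewrite (sumR_ext k (fun i => h (P2 k i)) (fun _ => h 1)).
  2:{ intros; unfold P2; destruct Compare_dec.lt_dec; [reflexivity|lia]. }
  rewrite (sumR_ext k (fun j => h (P2 k (k + j))) (fun _ => h 0)).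
  2:{ intros; unfold P2; destruct Compare_dec.lt_dec; [lia|reflexivity]. }
  rewrite !sumR_const; ring.
Qed.

Lemma P2_desc k : desc (k + k) (P2 k).
Proof.
  intros i j Hij Hj. unfold P2.
  destruct (Compare_dec.lt_dec j k), (Compare_dec.lt_dec i k); try lra; lia.
Qed.

Lemma psi0 q : psi q 0 = 0.
Proof. unfold psi. ring. Qed.

Lemma sumR_last' n f : (1 <= n)%nat -> sumR n f = sumR (n-1) f + f (n-1)%nat.
Proof. intros H. destruct n; [lia|]. replace (S n - 1)%nat with n by lia. reflexivity. Qed.

Lemma P1_weight q popt p1 p2 n :
  (1 <= q)%nat -> (2 <= n)%nat -> 0 <= popt n ->
  strategyproof (S (S q)) popt p1 p2 ->
  popt n / 8 <= p1 n (n-1)%nat + p2 n (n-1)%nat.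
Proof.
  intros Hq Hn Ha HSP.
  assert (HnR : 2 <= INR n) by (replace 2 with (INR 2) by (simpl; ring); apply le_INR; auto).
  set (dl := / INR n).
  assert (Hdl : 0 < dl) by (unfold dl; apply Rinv_0_lt_compat; lra).
  assert (Hndl : INR n * dl = 1) by (unfold dl; field; lra).
  assert (Hdl2 : dl <= / 2) by (unfold dl; apply Rinv_le_contravar; lra).
  assert (Hmin0 : isMin (S (S q)) n (Q n 0) 1).
  { apply root_min. rewrite Gf_Q by auto.
    replace (1 - 2) with (Ropp 1) by ring. replace (1 - 1) with 0 by ring. replace (1 - 0) with 1 by ring.
    rewrite psi_opp, psi0. ring. }
  assert (HO0 := OPT_spec _ n (Q n 0) (ex_intro _ 1 Hmin0)).
  assert (HO0lb : 1 - dl / 8 <= OPT (S (S q)) n (Q n 0)).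
  { apply (min_ge q n (Q n 0)); auto. rewrite Gf_Q by auto.
    rewrite (psi_neg q (1 - dl/8 - 2)) by lra. rewrite (psi_neg q (1 - dl/8 - 1)) by lra.
    rewrite (psi_pos q (1 - dl/8 - 0)) by lra.
    replace (- (1 - dl/8 - 2)) with (1 + dl/8) by ring. replace (- (1 - dl/8 - 1)) with (dl/8) by ring.
    replace (1 - dl/8 - 0) with (1 - dl/8) by ring.
    pose proof (pow_strict q (1 - dl/8) (1 + dl/8) ltac:(lra) ltac:(lra)).
    assert (0 <= INR (n-2) * (dl/8) ^ S q) by (apply Rmult_le_pos; [apply pos_INR| apply pow_le; lra]).
    lra. }
  set (d := - dl).
  assert (HG0 : Gf q n (Q n d) 0 < 0).
  { rewrite Gf_Q by auto. rewrite (psi_neg q (0 - 2)) by lra. rewrite (psi_neg q (0-1)) by lra.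
    rewrite (psi_pos q (0 - d)) by (unfold d; lra).
    replace (- (0 - 2)) with 2 by ring. replace (- (0 - 1)) with 1 by ring.
    replace (0 - d) with dl by (unfold d; ring).
    rewrite pow1. pose proof (pow_strict q dl 2 Hdl ltac:(lra)).
    assert (0 <= INR (n-2)) by apply pos_INR. lra. }
  assert (HG1 : 0 < Gf q n (Q n d) 1).
  { rewrite Gf_Q by auto. replace (1 - 2) with (Ropp 1) by ring. replace (1 - 1) with 0 by ring.
    rewrite psi_opp, psi0.
    rewrite (psi_pos q 1) by lra. rewrite (psi_pos q (1 - d)) by (unfold d; lra). rewrite pow1.
    pose proof (pow_strict q 1 (1 - d) ltac:(lra) ltac:(unfold d; lra)) as Hs. rewrite pow1 in Hs. lra. }
  assert (HGm : 0 < Gf q n (Q n d) (1 - dl/4)).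
  { rewrite Gf_Q by auto.
    rewrite (psi_neg q (1 - dl/4 - 2)) by lra. rewrite (psi_neg q (1 - dl/4 - 1)) by lra.
    rewrite (psi_pos q (1 - dl/4 - d)) by (unfold d; lra).
    replace (- (1 - dl/4 - 2)) with (1 + dl/4) by ring. replace (- (1 - dl/4 - 1)) with (dl/4) by ring.
    replace (1 - dl/4 - d) with (1 + dl/4 + dl/2) by (unfold d; field).
    pose proof (bern q (1 + dl/4) (1 + dl/4 + dl/2) ltac:(lra) ltac:(lra)) as Hb.
    assert (H1 : 1 <= (1 + dl/4) ^ q) by (apply pow_R1_Rle; lra).
    assert (H2 : 2 <= INR (S q)) by (replace 2 with (INR 2) by (simpl; ring); apply le_INR; lia).
    assert (H3 : 2 * 1 * (dl/2) <= INR (S q) * (1 + dl/4) ^ q * (1 + dl/4 + dl/2 - (1 + dl/4))).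
    { replace (1 + dl/4 + dl/2 - (1 + dl/4)) with (dl/2) by ring.
      apply Rmult_le_compat_r; [lra|]. apply Rmult_le_compat; lra. }
    assert (H4 : (dl/4) ^ S q <= (dl/4) * (dl/4)).
    { destruct q as [|q']; [lia|].
      change ((dl/4) ^ S (S q')) with (dl/4 * (dl/4 * (dl/4)^q')).
      pose proof (pow_le1 q' (dl/4) ltac:(lra)). pose proof (pow_le (dl/4) q' ltac:(lra)).
      apply Rmult_le_compat_l; [lra|].
      assert (dl/4 * (dl/4)^q' <= dl/4 * 1) by (apply Rmult_le_compat_l; lra). lra. }
    assert (H5 : INR (n-2) * (dl/4)^(S q) <= INR n * ((dl/4) * (dl/4))).
    { apply Rmult_le_compat; try lra. apply pos_INR. apply pow_le; lra.
      apply le_INR; lia. }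
    assert (E : INR n * (dl / 4 * (dl / 4)) = (INR n * dl) * dl / 16) by field.
    rewrite Hndl in E. lra. }
  destruct (IVT (fun w => Gf q n (Q n d) w) 0 1 (cont_Gf q n (Q n d)) ltac:(lra) HG0 HG1)
    as [y0 [Hy0 Gy0]].
  assert (HOd := OPT_spec _ n (Q n d) (ex_intro _ y0 (root_min q n (Q n d) y0 Gy0))).
  assert (HOdlb : 0 <= OPT (S (S q)) n (Q n d)) by (apply (min_ge q n (Q n d)); auto).
  assert (HOdub : OPT (S (S q)) n (Q n d) <= 1 - dl/4) by (apply (min_le q n (Q n d)); auto).
  pose proof (HSP n Hn (n-1)%nat ltac:(lia) (Q n 0) d) as Hsp.
  rewrite Q_update in Hsp by auto. rewrite Q_last in Hsp by auto.
  unfold agent_cost in Hsp. rewrite !exp_cost_desc in Hsp by (apply Q_desc; unfold d; lra).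
  rewrite !(sumR_last' n) in Hsp by lia.
  rewrite (sumR_ext (n-1) (fun j => (p1 n j + p2 n j) * Rabs (0 - Q n d j))
            (fun j => (p1 n j + p2 n j) * Rabs (0 - Q n 0 j))) in Hsp
    by (intros; rewrite (Q_before n d 0) by lia; reflexivity).
  rewrite !Q_last in Hsp by auto.
  rewrite (Rabs_left1 (0 - OPT (S (S q)) n (Q n 0))) in Hsp by lra.
  rewrite (Rabs_left1 (0 - OPT (S (S q)) n (Q n d))) in Hsp by lra.
  replace (0 - 0) with 0 in Hsp by ring. rewrite Rabs_R0 in Hsp.
  rewrite (Rabs_right (0 - d)) in Hsp by (unfold d; lra).
  replace (0 - d) with dl in Hsp by (unfold d; ring).
  assert (A1 : popt n * (1 - dl/8) <= popt n * OPT (S (S q)) n (Q n 0)) by (apply Rmult_le_compat_l; lra).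
  assert (A2 : popt n * OPT (S (S q)) n (Q n d) <= popt n * (1 - dl/4)) by (apply Rmult_le_compat_l; lra).
  assert (A3 : popt n / 8 * dl <= (p1 n (n-1)%nat + p2 n (n-1)%nat) * dl) by lra.
  apply Rmult_le_reg_r in A3; auto.
Qed.

Lemma sumR_scal n f c : sumR n (fun j => f j * c) = c * sumR n f.
Proof. induction n; simpl; [ring|rewrite IHn; ring]. Qed.

Lemma pow0S k : 0 ^ S k = 0.
Proof. simpl. ring. Qed.

Lemma Q_isMin q n : (2 <= n)%nat -> isMin (S (S q)) n (Q n 0) 1.
Proof.
  intros Hn. apply root_min. rewrite Gf_Q by auto.
  replace (1 - 2) with (Ropp 1) by ring. replace (1 - 1) with 0 by ring. replace (1 - 0) with 1 by ring.
  rewrite psi_opp, psi0. ring.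
Qed.

Lemma weights_nonneg popt p1 p2 n :
  (0 <= popt n /\ (forall j, (j < n)%nat -> 0 <= p1 n j /\ 0 <= p2 n j) /\
     popt n + sumR n (p1 n) + sumR n (p2 n) = 1) ->
  forall j, (j < n)%nat -> 0 <= p1 n j + p2 n j.
Proof. intros [_ [H _]] j Hj. destruct (H j Hj). lra. Qed.

Lemma P1_ratio q popt p1 p2 n : (2 <= n)%nat ->
  (0 <= popt n /\ (forall j, (j < n)%nat -> 0 <= p1 n j /\ 0 <= p2 n j) /\
     popt n + sumR n (p1 n) + sumR n (p2 n) = 1) ->
  sc_opt (S (S q)) n (Q n 0) = rootp (S (S q)) 2 /\
  (p1 n (n-1)%nat + p2 n (n-1)%nat) * rootp (S (S q)) (2 ^ S (S q) + INR (n-2))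
    <= sc_mech (S (S q)) popt p1 p2 n (Q n 0).
Proof.
  intros Hn Hw. split.
  - rewrite (sc_opt_eq _ n (Q n 0) 1) by (first [lia | apply Q_isMin; auto]).
    unfold sc_det. rewrite sumpow_Q by auto. f_equal.
    replace (2 - 1) with 1 by ring. replace (1 - 1) with 0 by ring. replace (0 - 1) with (Ropp 1) by ring.
    rewrite Rabs_Ropp, Rabs_R1, Rabs_R0, pow1, pow0S. ring.
  - unfold sc_mech. rewrite exp_cost_desc by (apply Q_desc; lra).
    pose proof (rootp_nonneg (S (S q)) (sumpow (S (S q)) n (Q n 0) (OPT (S (S q)) n (Q n 0)))).
    assert (0 <= popt n * sc_det (S (S q)) n (Q n 0) (OPT (S (S q)) n (Q n 0))).
    { apply Rmult_le_pos; [apply Hw|]. apply rootp_nonneg. }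
    pose proof (sumR_ge_term n (fun j => (p1 n j + p2 n j) * sc_det (S (S q)) n (Q n 0) (Q n 0 j)) (n-1)%nat
      (fun j Hj => Rmult_le_pos _ _ (weights_nonneg _ _ _ _ Hw j Hj) (rootp_nonneg _ _)) ltac:(lia)) as Ht.
    simpl in Ht. rewrite Q_last in Ht by auto.
    unfold sc_det at 1 in Ht. rewrite sumpow_Q in Ht by auto.
    replace (2 - 0) with 2 in Ht by ring. replace (1 - 0) with 1 in Ht by ring. replace (0 - 0) with 0 in Ht by ring.
    rewrite Rabs_R1, Rabs_R0, pow1, pow0S, (Rabs_right 2) in Ht by lra.
    replace (2 ^ S (S q) + INR (n - 2) * 1 + 0) with (2 ^ S (S q) + INR (n - 2)) in Ht by ring.
    lra.
Qed.

Lemma P2_isMin q k : isMin (S (S q)) (k + k) (P2 k) (/ 2).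
Proof.
  apply root_min. unfold Gf. rewrite (sumR_P2 k (fun u => psi q (/2 - u))).
  replace (/2 - 1) with (- (/2 - 0)) by field. rewrite psi_opp. ring.
Qed.

Lemma sumpow_P2 p k y : sumpow p (k + k) (P2 k) y = INR k * Rabs (1 - y) ^ p + INR k * Rabs (0 - y) ^ p.
Proof. unfold sumpow. apply (sumR_P2 k (fun u => Rabs (u - y) ^ p)). Qed.

Lemma P2_ratio q popt p1 p2 k : (1 <= k)%nat ->
  (0 <= popt (k+k)%nat /\ (forall j, (j < k+k)%nat -> 0 <= p1 (k+k)%nat j /\ 0 <= p2 (k+k)%nat j) /\
     popt (k+k)%nat + sumR (k+k) (p1 (k+k)%nat) + sumR (k+k) (p2 (k+k)%nat) = 1) ->
  sc_opt (S (S q)) (k+k) (P2 k) = rootp (S (S q)) (2 * INR k * (/2) ^ S (S q)) /\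
  popt (k+k)%nat * rootp (S (S q)) (2 * INR k * (/2) ^ S (S q))
   + (1 - popt (k+k)%nat) * rootp (S (S q)) (INR k)
    <= sc_mech (S (S q)) popt p1 p2 (k+k) (P2 k).
Proof.
  intros Hk Hw.
  assert (E : sumpow (S (S q)) (k+k) (P2 k) (/2) = 2 * INR k * (/2) ^ S (S q)).
  { rewrite sumpow_P2. replace (1 - /2) with (/2) by field. replace (0 - /2) with (- /2) by ring.
    rewrite Rabs_Ropp, Rabs_right by lra. ring. }
  split.
  - rewrite (sc_opt_eq _ (k+k) (P2 k) (/2)) by (first [lia | apply P2_isMin]). unfold sc_det. rewrite E. reflexivity.
  - unfold sc_mech. rewrite exp_cost_desc by apply P2_desc.
    assert (H1 : rootp (S (S q)) (2 * INR k * (/2) ^ S (S q)) <=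
                 sc_det (S (S q)) (k+k) (P2 k) (OPT (S (S q)) (k+k) (P2 k))).
    { unfold sc_det. rewrite <- E. apply rootp_mono; [lia|]. apply P2_isMin. }
    assert (H2 : popt (k+k)%nat * rootp (S (S q)) (2 * INR k * (/2) ^ S (S q)) <=
                 popt (k+k)%nat * sc_det (S (S q)) (k+k) (P2 k) (OPT (S (S q)) (k+k) (P2 k)))
      by (apply Rmult_le_compat_l; [apply Hw|auto]).
    rewrite (sumR_ext (k+k) (fun j => (p1 (k+k)%nat j + p2 (k+k)%nat j) * sc_det (S (S q)) (k+k) (P2 k) (P2 k j))
               (fun j => (p1 (k+k)%nat j + p2 (k+k)%nat j) * rootp (S (S q)) (INR k))).
    2:{ intros j Hj. f_equal. unfold sc_det. f_equal. rewrite sumpow_P2. unfold P2.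
        destruct (Compare_dec.lt_dec j k).
        - replace (1 - 1) with 0 by ring. replace (0 - 1) with (Ropp 1) by ring.
          rewrite Rabs_Ropp, Rabs_R1, Rabs_R0, pow1, pow0S. ring.
        - replace (1 - 0) with 1 by ring. replace (0 - 0) with 0 by ring.
          rewrite Rabs_R1, Rabs_R0, pow1, pow0S. ring. }
    rewrite sumR_scal, sumR_plus.
    destruct Hw as [_ [_ Hs]].
    replace (sumR (k + k) (p1 (k + k)%nat) + sumR (k + k) (p2 (k + k)%nat)) with (1 - popt (k+k)%nat) by lra.
    lra.
Qed.

Lemma div_gt r a b : 0 < b -> r * b < a -> r < a / b.
Proof.
  intros Hb H. assert (E : a / b = r + (a - r * b) / b) by (field; lra).
  assert (0 < (a - r*b)/b) by (apply Rdiv_lt_0_compat; lra). lra.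
Qed.

Lemma Rpower_pow_inv M p : 0 < M -> (0 < p)%nat -> Rpower (M ^ p) (/ INR p) = M.
Proof.
  intros HM Hp. rewrite <- Rpower_pow by auto. rewrite Rpower_mult.
  rewrite Rinv_r by (apply not_0_INR; lia). apply Rpower_1; auto.
Qed.

Theorem mainTheorem6 (p : nat) (popt : nat -> R) (p1 p2 : nat -> nat -> R) :
  (2 < p)%nat ->
  (forall n, (2 <= n)%nat ->
     0 <= popt n /\
     (forall j, (j < n)%nat -> 0 <= p1 n j /\ 0 <= p2 n j) /\
     popt n + sumR n (p1 n) + sumR n (p2 n) = 1) ->
  strategyproof p popt p1 p2 ->
  approx_ratio_ge p popt p1 p2 (Rpower 2 (1 - / INR p)).
Proof.
  intros Hp Hw HSP r' Hr'.
  destruct p as [|[|q]]; try lia.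
  assert (Hq : (1 <= q)%nat) by lia.
  set (R0 := Rpower 2 (1 - / INR (S (S q)))) in *.
  assert (HpR : 3 <= INR (S (S q))) by (replace 3 with (INR 3) by (simpl; ring); apply le_INR; lia).
  assert (Hinv : / INR (S (S q)) < 1).
  { rewrite <- Rinv_1. apply Rinv_lt_contravar; lra. }
  assert (Hinv0 : 0 < / INR (S (S q))) by (apply Rinv_0_lt_compat; lra).
  assert (HR1 : 1 < R0).
  { assert (E : Rpower 2 0 = 1) by (apply Rpower_O; lra).
    assert (Rpower 2 0 < R0) by (unfold R0; apply Rpower_lt; lra). lra. }
  assert (HR2 : R0 < 2).
  { assert (E : Rpower 2 1 = 2) by (apply Rpower_1; lra).
    assert (R0 < Rpower 2 1) by (unfold R0; apply Rpower_lt; lra). lra. }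
  set (al := (R0 - r') / (R0 - 1)).
  assert (Hal : 0 < al) by (unfold al; apply Rdiv_lt_0_compat; lra).
  assert (Hal2 : al * (R0 - 1) = R0 - r') by (unfold al; field; lra).
  set (M := 16 / al).
  assert (HM : 0 < M) by (unfold M; apply Rdiv_lt_0_compat; lra).
  assert (HaM : al * M = 16) by (unfold M; field; lra).
  destruct (nat_unbounded (M ^ S (S q))) as [k Hk].
  set (k' := S k).
  set (n := (k' + k')%nat).
  assert (Hn : (2 <= n)%nat) by (unfold n, k'; lia).
  assert (Hk' : INR k' = INR k + 1) by (unfold k'; apply S_INR).
  assert (HnR : INR n = 2 * INR k') by (unfold n; rewrite plus_INR; ring).
  assert (Hc : forall t, 0 < t -> rootp (S (S q)) t = Rpower t (/ INR (S (S q)))) by (intros; apply rootp_pos; auto).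
  assert (Hpos : forall t, 0 < Rpower t (/ INR (S (S q)))) by (intros; unfold Rpower; apply exp_pos).
  destruct (Rlt_dec (popt n * (R0 - 1)) (R0 - r')) as [Hlt|Hge].
  - exists n, (P2 k'). split; [auto|]. left.
    destruct (P2_ratio q popt p1 p2 k' ltac:(unfold k'; lia) (Hw n Hn)) as [Eo Hm].
    fold n in Eo, Hm. rewrite Eo.
    set (S0 := 2 * INR k' * (/ 2) ^ S (S q)) in *.
    assert (HS0 : 0 < S0).
    { unfold S0. apply Rmult_lt_0_compat; [|apply pow_lt; lra].
      apply Rmult_lt_0_compat; [lra| apply lt_0_INR; unfold k'; lia]. }
    assert (H2 : 2 ^ S (S q) * (/ 2) ^ S (S q) = 1).
    { rewrite <- Rpow_mult_distr, Rinv_r, pow1 by lra; reflexivity. }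
    assert (Ek : INR k' = 2 ^ S q * S0).
    { unfold S0. replace (2 ^ S q * (2 * INR k' * (/2) ^ S (S q))) with
        (INR k' * (2 ^ S (S q) * (/ 2) ^ S (S q))) by (simpl; ring). rewrite H2; ring. }
    assert (Hpq : 0 < 2 ^ S q) by (apply pow_lt; lra).
    assert (ER : Rpower (2 ^ S q) (/ INR (S (S q))) = R0).
    { rewrite <- Rpower_pow by lra. rewrite Rpower_mult. unfold R0. f_equal.
      rewrite (S_INR (S q)). field. pose proof (pos_INR (S q)). lra. }
    assert (Erk : rootp (S (S q)) (INR k') = R0 * rootp (S (S q)) S0).
    { rewrite !Hc by (auto; rewrite Ek; apply Rmult_lt_0_compat; auto).
      rewrite Ek, <- Rpower_mult_distr by auto. rewrite ER. reflexivity. }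
    rewrite Erk in Hm.
    set (rS := rootp (S (S q)) S0) in *.
    assert (HrS : 0 < rS) by (unfold rS; rewrite Hc by auto; apply Hpos).
    split; [auto|]. apply div_gt; auto.
    assert (0 < (R0 - popt n * (R0 - 1) - r') * rS) by (apply Rmult_lt_0_compat; lra).
    nra.
  - exists n, (Q n 0). split; [auto|]. left.
    destruct (P1_ratio q popt p1 p2 n Hn (Hw n Hn)) as [Eo Hm]. rewrite Eo.
    pose proof (P1_weight q popt p1 p2 n Hq Hn (proj1 (Hw n Hn)) HSP) as Hwt.
    assert (Hag : al <= popt n).
    { destruct (Rle_dec al (popt n)); auto. exfalso. apply Hge.
      assert (popt n * (R0 - 1) < al * (R0 - 1)) by (apply Rmult_lt_compat_r; lra). lra. }
    set (T := 2 ^ S (S q) + INR (n - 2)) in *.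
    assert (HT : 2 * M ^ S (S q) <= T).
    { unfold T. rewrite minus_INR by auto. simpl INR at 2.
      assert (1 <= 2 ^ S q) by (apply pow_R1_Rle; lra).
      change (2 ^ S (S q)) with (2 * 2 ^ S q). lra. }
    assert (HMp : 0 < M ^ S (S q)) by (apply pow_lt; auto).
    set (r2 := rootp (S (S q)) 2).
    assert (Hr2 : 0 < r2) by (unfold r2; rewrite Hc by lra; apply Hpos).
    assert (HrT : r2 * M <= rootp (S (S q)) T).
    { assert (rootp (S (S q)) (2 * M ^ S (S q)) <= rootp (S (S q)) T) by (apply rootp_mono; [lia|auto]).
      rewrite Hc in H by (apply Rmult_lt_0_compat; lra).
      rewrite <- Rpower_mult_distr in H by lra. rewrite Rpower_pow_inv in H by (auto; lia).
      unfold r2. rewrite Hc by lra. exact H. }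
    split; [auto|]. apply div_gt; auto.
    assert (0 <= rootp (S (S q)) T) by apply rootp_nonneg.
    assert (A1 : popt n / 8 * rootp (S (S q)) T <= (p1 n (n - 1)%nat + p2 n (n - 1)%nat) * rootp (S (S q)) T)
      by (apply Rmult_le_compat_r; auto).
    assert (A2 : popt n / 8 * (r2 * M) <= popt n / 8 * rootp (S (S q)) T)
      by (apply Rmult_le_compat_l; [pose proof (proj1 (Hw n Hn)); lra | auto]).
    assert (A3 : al * M * r2 <= popt n * M * r2)
      by (apply Rmult_le_compat_r; [lra|]; apply Rmult_le_compat_r; lra).
    rewrite HaM in A3.
    assert (A4 : r' * r2 < 2 * r2) by (apply Rmult_lt_compat_r; lra).
    nra.
Qed.
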